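(* Let $p\in[2,\infty]$ and $p^*=\frac{p}{p-1}$ (with $p^*=1$ when $p=\infty$). For every continuous bilinear form $T:X_p\times X_\infty\to\mathbb{R}$, \[ \left(\sum_{i=1}^{\infty}\left(\sum_{j=1}^{\infty}|T(e_i,e_j)|^2\right)^{\frac{1}{2}\cdot\frac{p}{p-1}}\right)^{\frac{p-1}{p}}\le \mathrm{A}_{p^*}\,\|T\|. \] In particular the optimal constant $C_{p,\infty}$ satisfies $C_{p,\infty}\le \mathrm{A}_{p^*}$.
   Context: Scalars are real. $X_p=\ell_p$ for $1\le p<\infty$ and $X_\infty=c_0$; $(e_k)$ denotes the canonical unit vectors. For a continuous bilinear form $T:X_p\times X_q\to\mathbb{R}$, $\|T\|=\sup\{|T(x,y)|:\|x\|_{X_p}\le1,\|y\|_{X_q}\le1\}$. The Rademacher functions are $r_j:[0,1]\to\mathbb{R}$, $r_j(t)=\operatorname{sign}(\sin(2^j\pi t))$. For $0<r<\infty$, $\mathrm{A}_r$ denotes the optimal (smallest) constant such that for all $n\in\mathbb{N}$ and all real $a_1,\dots,a_n$, $\left(\sum_{j=1}^n|a_j|^2\right)^{1/2}\le \mathrm{A}_r\left(\int_0^1\left|\sum_{j=1}^n a_jr_j(t)\right|^r dt\right)^{1/r}$ (Khintchine inequality). For $p\in[2,\infty]$, $C_{p,\infty}$ denotes the optimal constant $C$ such that $\left(\sum_{i}\left(\sum_{j}|T(e_i,e_j)|^2\right)^{\frac{p}{2(p-1)}}\right)^{\frac{p-1}{p}}\le C\|T\|$ for all continuous bilinear $T:X_p\times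 X_\infty\to\mathbb{R}$ (with exponent $p/(p-1)$ read as $1$ when $p=\infty$). *)

(* Defs.v *)
From Stdlib Require Import Reals Lra.
Open Scope R_scope.

(* Real power x^y for x >= 0, y > 0, with 0^y = 0 (Stdlib's Rpower 0 y = 1). *)
Definition rpow (x y : R) : R :=
  if Rle_dec x 0 then 0 else Rpower x y.

(* Exponents p in [2, infinity]: Some p = finite p, None = infinity. *)
Definition ext_exp := option R.

Definition valid_exp (p : ext_exp) : Prop :=
  match p with Some p => 2 <= p | None => True end.

Definition conj_exp (p : ext_exp) : R :=
  match p with Some p => p / (p - 1) | None => 1 end.

Definition in_X (p : ext_exp) (x : nat -> R) : Prop :=
  match p with
  | Some p => exists l, infinite_sum (fun k => rpow (Rabs (x k)) p) l
  | None => Un_cv x 0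
  end.

Definition in_ball (p : ext_exp) (x : nat -> R) : Prop :=
  match p with
  | Some p => exists l, infinite_sum (fun k => rpow (Rabs (x k)) p) l
                        /\ rpow l (1 / p) <= 1
  | None => Un_cv x 0 /\ (forall k, Rabs (x k) <= 1)
  end.

Definition e (i : nat) : nat -> R := fun k => if Nat.eq_dec k i then 1 else 0.

Definition lincomb (a b : R) (x y : nat -> R) : nat -> R :=
  fun k => a * x k + b * y k.

Definition bilinear_on (p q : ext_exp) (T : (nat -> R) -> (nat -> R) -> R) : Prop :=
  (forall a b x1 x2 y, in_X p x1 -> in_X p x2 -> in_X q y ->
     T (lincomb a b x1 x2) y = a * T x1 y + b * T x2 y) /\
  (forall a b x y1 y2, in_X p x -> in_X q y1 -> in_X q y2 ->
     T x (lincomb a b y1 y2) = a * T x y1 + b * T x y2).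

Definition norm_bound (p q : ext_exp) (T : (nat -> R) -> (nat -> R) -> R) (M : R) : Prop :=
  forall x y, in_ball p x -> in_ball q y -> Rabs (T x y) <= M.

(* Continuity of a bilinear form = boundedness. *)
Definition continuous_bilinear (p q : ext_exp) (T : (nat -> R) -> (nat -> R) -> R) : Prop :=
  bilinear_on p q T /\ exists M, norm_bound p q T M.

Definition is_opnorm (p q : ext_exp) (T : (nat -> R) -> (nat -> R) -> R) (N : R) : Prop :=
  is_lub (fun v => exists x y, in_ball p x /\ in_ball q y /\ v = Rabs (T x y)) N.

Definition Rsign (x : R) : R :=
  if Rlt_dec 0 x then 1 else if Rlt_dec x 0 then -1 else 0.

Definition rademacher (j : nat) (t : R) : R := Rsign (sin (2 ^ j * PI * t)).

(* A is a valid constant in the Khintchine inequality with exponent r: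
   for all n and a_1..a_n (here a (j-1) for j=1..n),
   (sum |a_j|^2)^(1/2) <= A (int_0^1 |sum a_j r_j(t)|^r dt)^(1/r). *)
Definition khintchine_valid (r A : R) : Prop :=
  forall (n : nat) (a : nat -> R) (v : R),
    (exists pr : Riemann_integrable
        (fun t => rpow (Rabs (sum_f_R0 (fun j => a j * rademacher (S j) t) n)) r) 0 1,
        RiemannInt pr = v) ->
    sqrt (sum_f_R0 (fun j => Rabs (a j) ^ 2) n) <= A * rpow v (1 / r).

Definition is_khintchine_opt (r A : R) : Prop :=
  (forall B, khintchine_valid r B -> A <= B) /\
  (forall B, (forall C, khintchine_valid r C -> B <= C) -> B <= A).

(* Main.v *)
Require Import Defs.
From Stdlib Require Import Reals Lra Lia FunctionalExtensionality Classical.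
From Coquelicot Require Import Coquelicot.
Open Scope R_scope.

Lemma rpow_ge0 x y : 0 <= rpow x y.
Proof. unfold rpow; destruct (Rle_dec x 0). lra. unfold Rpower; left; apply exp_pos. Qed.

Lemma rpow_np x y : x <= 0 -> rpow x y = 0.
Proof. unfold rpow; destruct (Rle_dec x 0); lra. Qed.

Lemma rpow_pos x y : 0 < x -> rpow x y = Rpower x y.
Proof. unfold rpow; destruct (Rle_dec x 0); lra. Qed.

Lemma rpow_gt0 x y : 0 < x -> 0 < rpow x y.
Proof. intros; rewrite rpow_pos; auto; unfold Rpower; apply exp_pos. Qed.

Lemma rpow_mul x y z : 0 <= x -> 0 <= y -> rpow (x*y) z = rpow x z * rpow y z.
Proof.
  intros hx hy. destruct hx as [hx|hx]; [destruct hy as [hy|hy]|].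
  - rewrite !rpow_pos; try nra. now rewrite Rpower_mult_distr.
  - subst. rewrite Rmult_0_r, !(rpow_np 0); lra.
  - subst. rewrite Rmult_0_l, !(rpow_np 0); lra.
Qed.

Lemma rpow_rpow x y z : 0 <= x -> rpow (rpow x y) z = rpow x (y*z).
Proof.
  intros [hx|hx].
  - rewrite (rpow_pos x y), (rpow_pos x), rpow_pos; auto. apply Rpower_mult.
    unfold Rpower; apply exp_pos.
  - subst. rewrite !(rpow_np 0); lra.
Qed.

Lemma rpow_plus x y z : 0 <= x -> rpow x (y+z) = rpow x y * rpow x z.
Proof.
  intros [hx|hx].
  - rewrite !rpow_pos; auto. apply Rpower_plus.
  - subst. rewrite !(rpow_np 0); lra.
Qed.

Lemma rpow_1 x : 0 <= x -> rpow x 1 = x.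
Proof. intros [hx|hx]. rewrite rpow_pos; auto. apply Rpower_1; auto. subst; apply rpow_np; lra. Qed.

Lemma rpow_base1 z : rpow 1 z = 1.
Proof. rewrite rpow_pos by lra. unfold Rpower. rewrite ln_1, Rmult_0_r. apply exp_0. Qed.

Lemma rpow_le x y z : 0 <= x <= y -> 0 < z -> rpow x z <= rpow y z.
Proof.
  intros [[hx|hx] hxy] hz.
  - rewrite !rpow_pos; try lra. apply Rle_Rpower_l; lra.
  - subst. rewrite rpow_np by lra. apply rpow_ge0.
Qed.

Lemma rpow_inv x z : 0 < x -> rpow (/x) z = / rpow x z.
Proof.
  intros hx. assert (h := rpow_mul x (/x) z).
  rewrite Rinv_r, rpow_base1 in h by lra.
  assert (0 < rpow x z) by (apply rpow_gt0; auto).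
  assert (0 < /x) by (apply Rinv_0_lt_compat; auto).
  apply (Rmult_eq_reg_l (rpow x z)); try lra. rewrite Rinv_r by lra. rewrite <- h; lra.
Qed.

Lemma rpow_sqrt x : 0 <= x -> rpow x (/2) = sqrt x.
Proof.
  intros [hx|hx]. rewrite rpow_pos; auto. apply Rpower_sqrt; auto.
  subst. rewrite sqrt_0; apply rpow_np; lra.
Qed.

Lemma rpow_r_inv x r : 0 <= x -> 0 < r -> rpow (rpow x r) (/r) = x.
Proof. intros. rewrite rpow_rpow, Rinv_r, rpow_1; lra. Qed.
Lemma rpow_inv_r x r : 0 <= x -> 0 < r -> rpow (rpow x (/r)) r = x.
Proof. intros. rewrite rpow_rpow, Rinv_l, rpow_1; lra. Qed.

Definition vsum (n : nat) (c : nat -> R) : nat -> R :=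
  fun k => sum_f_R0 (fun i => c i * e i k) n.

Lemma vsum_val n c k : vsum n c k = if Compare_dec.le_dec k n then c k else 0.
Proof.
  unfold vsum. induction n.
  - simpl. unfold e. destruct (Nat.eq_dec k 0); destruct (Compare_dec.le_dec k 0); try lia; subst; lra.
  - simpl. rewrite IHn. unfold e. destruct (Nat.eq_dec k (S n)); destruct (Compare_dec.le_dec k n);
    destruct (Compare_dec.le_dec k (S n)); try lia; subst; lra.
Qed.

Lemma sum_stable (u : nat -> R) n : (forall k, (n < k)%nat -> u k = 0) ->
  forall N, (n <= N)%nat -> sum_f_R0 u N = sum_f_R0 u n.
Proof.
  intros H N HN. induction HN. auto. simpl. rewrite IHHN, H; lia || lra.
Qed.

Lemma fs_sum (u : nat -> R) n : (forall k, (n < k)%nat -> u k = 0) ->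
  infinite_sum u (sum_f_R0 u n).
Proof.
  intros H eps Heps. exists n. intros N HN. unfold R_dist.
  rewrite (sum_stable u n H N) by lia. rewrite Rminus_diag, Rabs_R0; lra.
Qed.

Lemma fs_cv (u : nat -> R) n : (forall k, (n < k)%nat -> u k = 0) -> Un_cv u 0.
Proof.
  intros H eps Heps. exists (S n). intros N HN. unfold R_dist.
  rewrite H by lia. rewrite Rminus_diag, Rabs_R0; lra.
Qed.

Lemma fs_in_X P (u : nat -> R) n : (forall k, (n < k)%nat -> u k = 0) -> in_X P u.
Proof.
  intros H. destruct P as [q|]; simpl.
  - eexists. apply (fs_sum _ n). intros k hk. rewrite H by auto. rewrite Rabs_R0. apply rpow_np; lra.
  - eapply fs_cv; eauto.
Qed.

Lemma vsum_fs n c k : (n < k)%nat -> vsum n c k = 0.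
Proof. intros; rewrite vsum_val; destruct (Compare_dec.le_dec k n); lia || lra. Qed.

Lemma vsum_in_X P n c : in_X P (vsum n c).
Proof. apply (fs_in_X P _ n). apply vsum_fs. Qed.

Lemma e_in_X P i : in_X P (e i).
Proof. apply (fs_in_X P _ i). intros k hk; unfold e; destruct (Nat.eq_dec k i); lia || lra. Qed.

Lemma vsum_S n c : vsum (S n) c = lincomb 1 (c (S n)) (vsum n c) (e (S n)).
Proof. apply functional_extensionality; intro k. unfold vsum, lincomb; simpl; lra. Qed.

Lemma vsum_0 c : vsum 0 c = lincomb (c 0%nat) 0 (e 0) (e 0).
Proof. apply functional_extensionality; intro k. unfold vsum, lincomb; simpl; lra. Qed.

Lemma lin1 p q T y n c : bilinear_on p q T -> in_X q y ->
  T (vsum n c) y = sum_f_R0 (fun i => c i * T (e i) y) n.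
Proof.
  intros [H1 _] hy. induction n.
  - rewrite vsum_0, H1; try apply e_in_X; auto. simpl; lra.
  - rewrite vsum_S, H1; try apply e_in_X; try apply vsum_in_X; auto. rewrite IHn. simpl; lra.
Qed.

Lemma lin2 p q T x m c : bilinear_on p q T -> in_X p x ->
  T x (vsum m c) = sum_f_R0 (fun j => c j * T x (e j)) m.
Proof.
  intros [_ H2] hx. induction m.
  - rewrite vsum_0, H2; try apply e_in_X; auto. simpl; lra.
  - rewrite vsum_S, H2; try apply e_in_X; try apply vsum_in_X; auto. rewrite IHm. simpl; lra.
Qed.

Lemma Rsign_bound x : Rabs (Rsign x) <= 1.
Proof. unfold Rsign; destruct (Rlt_dec 0 x); destruct (Rlt_dec x 0);
  try (rewrite Rabs_R1; lra). rewrite Rabs_left; lra. rewrite Rabs_R0; lra. Qed.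

Lemma Rsign_mul x : Rsign x * x = Rabs x.
Proof. unfold Rsign; destruct (Rlt_dec 0 x); destruct (Rlt_dec x 0).
  lra. rewrite Rabs_right; lra. rewrite Rabs_left; lra. assert (x = 0) by lra; subst; rewrite Rabs_R0; lra. Qed.

Lemma Rsign_abs_mul x y : Rabs x = 0 -> y = 0 -> True. Proof. auto. Qed.

Lemma vsum_ball_inf n c : (forall i, Rabs (c i) <= 1) -> in_ball None (vsum n c).
Proof.
  intros H. split. apply (fs_cv _ n); apply vsum_fs.
  intros k; rewrite vsum_val; destruct (Compare_dec.le_dec k n); auto. rewrite Rabs_R0; lra.
Qed.

Lemma zero_ball P : valid_exp P -> in_ball P (fun _ => 0).
Proof.
  destruct P as [q|]; simpl; intros hv.
  - exists 0. split. intros eps he; exists 0%nat; intros; unfold R_dist.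
    rewrite (sum_eq _ (fun _ => 0)). rewrite sum_cte. rewrite Rmult_0_l, Rminus_diag, Rabs_R0; lra.
    intros; rewrite Rabs_R0; apply rpow_np; lra.
    rewrite rpow_np; lra.
  - split. intros eps he; exists 0%nat; intros; unfold R_dist. rewrite Rminus_diag, Rabs_R0; lra.
    intros; rewrite Rabs_R0; lra.
Qed.

Lemma Rsign_rpow x s : Rabs (Rsign x) * rpow (Rabs x) s = rpow (Rabs x) s.
Proof.
  unfold Rsign; destruct (Rlt_dec 0 x); destruct (Rlt_dec x 0).
  lra. rewrite Rabs_R1; lra. rewrite Rabs_left; lra.
  assert (x = 0) by lra; subst. rewrite Rabs_R0, rpow_np; lra.
Qed.

Lemma opnorm_ub p T normT x y : is_opnorm p None T normT -> in_ball p x -> in_ball None y ->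
  Rabs (T x y) <= normT.
Proof. intros [H _] hx hy. apply H. exists x, y. auto. Qed.

Lemma conj_facts q : 2 <= q -> let r := q / (q - 1) in 1 < r /\ (r - 1) * q = r /\ / r + / q = 1.
Proof.
  intros hq r. unfold r. split; [|split].
  - apply (Rmult_lt_reg_r (q-1)); try lra. unfold Rdiv. rewrite Rmult_assoc, Rinv_l; lra.
  - field. lra.
  - field. lra.
Qed.

Lemma duality p T normT y n : valid_exp p -> bilinear_on p None T -> is_opnorm p None T normT ->
  in_ball None y ->
  sum_f_R0 (fun i => rpow (Rabs (T (e i) y)) (conj_exp p)) n <= rpow normT (conj_exp p).
Proof.
  intros hv hbil hnorm hy.
  assert (hyX : in_X None y) by (destruct hy; auto).
  set (b := fun i => T (e i) y).
  destruct p as [q|]; simpl in *.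
  - destruct (conj_facts q hv) as (hr1 & hr2 & hr3).
    set (r := q / (q-1)) in *.
    set (S := sum_f_R0 (fun i => rpow (Rabs (T (e i) y)) r) n).
    assert (hS0 : 0 <= S) by (apply cond_pos_sum; intros; apply rpow_ge0).
    destruct hS0 as [hS|hS]; [|rewrite <- hS; apply rpow_ge0].
    assert (hSq : 0 < rpow S (/q)) by (apply rpow_gt0; auto).
    set (c := fun i => Rsign (b i) * rpow (Rabs (b i)) (r-1) * / rpow S (/q)).
    assert (hball : in_ball (Some q) (vsum n c)).
    { exists (sum_f_R0 (fun k => rpow (Rabs (vsum n c k)) q) n). split.
      - apply fs_sum. intros k hk. rewrite vsum_fs, Rabs_R0 by auto. apply rpow_np; lra.
      - rewrite (sum_eq _ (fun k => rpow (Rabs (T (e k) y)) r * / S)).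
        + rewrite <- scal_sum. fold S. rewrite Rinv_l by lra. rewrite rpow_base1; lra.
        + intros k hk. rewrite vsum_val. destruct (Compare_dec.le_dec k n); try lia.
          unfold c, b. rewrite !Rabs_mult.
          rewrite (Rabs_right (rpow _ _)) by (apply Rle_ge, rpow_ge0). rewrite Rsign_rpow.
          rewrite (Rabs_right (/ _)) by (apply Rle_ge; left; apply Rinv_0_lt_compat; auto).
          rewrite rpow_mul by (apply rpow_ge0 || (left; apply Rinv_0_lt_compat; auto)).
          rewrite rpow_inv, rpow_rpow, hr2, rpow_rpow by (auto || apply Rabs_pos || lra).
          rewrite Rinv_l, rpow_1 by lra. reflexivity. }
    assert (hT := opnorm_ub _ _ _ _ _ hnorm hball hy).
    rewrite (lin1 _ None _ _ _ _ hbil hyX) in hT.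
    rewrite (sum_eq _ (fun i => rpow (Rabs (T (e i) y)) r * / rpow S (/q))) in hT.
    + rewrite <- scal_sum in hT. fold S in hT.
      assert (hSr : S * / rpow S (/ q) = rpow S (/r)).
      { apply (Rmult_eq_reg_r (rpow S (/q))); try lra.
        rewrite Rmult_assoc, Rinv_l, <- rpow_plus, hr3, rpow_1; lra. }
      rewrite Rmult_comm, hSr in hT.
      rewrite Rabs_right in hT by (apply Rle_ge, rpow_ge0).
      rewrite <- (rpow_inv_r S r) by lra. apply rpow_le; try lra. split; auto. apply rpow_ge0.
    + intros i hi. unfold c, b. 
      replace (Rsign (T (e i) y) * rpow (Rabs (T (e i) y)) (r - 1) * / rpow S (/ q) * T (e i) y)
        with ((Rsign (T (e i) y) * T (e i) y) * rpow (Rabs (T (e i) y)) (r - 1) * / rpow S (/ q)) by ring.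
      rewrite Rsign_mul. rewrite <- (rpow_1 (Rabs (T (e i) y))) at 1 by apply Rabs_pos.
      rewrite <- rpow_plus by apply Rabs_pos. replace (1 + (r-1)) with r by ring. reflexivity.
  - set (c := fun i => Rsign (b i)).
    assert (hball : in_ball None (vsum n c)) by (apply vsum_ball_inf; intros; apply Rsign_bound).
    assert (hT := opnorm_ub _ _ _ _ _ hnorm hball hy).
    rewrite (lin1 _ None _ _ _ _ hbil hyX) in hT.
    rewrite (sum_eq _ (fun i => Rabs (T (e i) y))) in hT by (intros; unfold c, b; apply Rsign_mul).
    rewrite (sum_eq _ (fun i => Rabs (T (e i) y))) by (intros; apply rpow_1, Rabs_pos).
    assert (0 <= sum_f_R0 (fun i => Rabs (T (e i) y)) n) by (apply cond_pos_sum; intros; apply Rabs_pos).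
    rewrite Rabs_right in hT by lra.
    rewrite rpow_1; lra.
Qed.

Lemma Rsign_opp x : Rsign (- x) = - Rsign x.
Proof. unfold Rsign; destruct (Rlt_dec 0 x); destruct (Rlt_dec x 0);
  destruct (Rlt_dec 0 (-x)); destruct (Rlt_dec (-x) 0); lra. Qed.

Lemma sign_sin M : forall s, INR M < s < INR M + 1 -> Rsign (sin (PI * s)) = (-1)^M.
Proof.
  induction M; intros s hs.
  - simpl in *. unfold Rsign. assert (0 < sin (PI * s)).
    { apply sin_gt_0. assert (0 < PI) by apply PI_RGT_0. nra.
      assert (0 < PI) by apply PI_RGT_0. nra. }
    destruct (Rlt_dec 0 (sin (PI * s))); lra.
  - rewrite S_INR in hs. replace (PI * s) with (PI * (s - 1) + PI) by ring.
    rewrite neg_sin, Rsign_opp, IHM by lra. simpl; ring.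
Qed.

Lemma pc_int (g : R -> R) N :
  (forall k t t', INR k / 2^N < t < (INR k + 1)/2^N -> INR k / 2^N < t' < (INR k + 1)/2^N ->
     g t = g t') -> ex_RInt g 0 1.
Proof.
  intros H.
  assert (h2 : 0 < 2^N) by (apply pow_lt; lra).
  assert (forall K, ex_RInt g 0 (INR K / 2^N)).
  { induction K.
    - simpl. unfold Rdiv; rewrite Rmult_0_l. apply ex_RInt_point.
    - apply ex_RInt_Chasles with (1 := IHK).
      set (a := INR K / 2^N). set (b := INR (S K) / 2^N).
      assert (hab : a < b). { unfold a, b. rewrite S_INR. unfold Rdiv.
        apply Rmult_lt_compat_r. apply Rinv_0_lt_compat; auto. lra. }
      apply ex_RInt_ext with (f := fun _ => g ((a+b)/2)); [|apply ex_RInt_const].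
      intros x hx. rewrite Rmin_left, Rmax_right in hx by lra.
      apply (H K). unfold a, b in *; rewrite S_INR in *; lra.
      unfold a, b in *; rewrite S_INR in *; lra. }
  specialize (H0 (2^N)%nat). rewrite pow_INR in H0. simpl INR in H0.
  replace (1 + 1) with 2 in H0 by ring. unfold Rdiv in H0. rewrite Rinv_r in H0 by lra. auto.
Qed.

Lemma rad_const j N k t t' : (S j <= N)%nat ->
  INR k / 2^N < t < (INR k + 1)/2^N -> INR k / 2^N < t' < (INR k + 1)/2^N ->
  rademacher (S j) t = rademacher (S j) t'.
Proof.
  intros hN ht ht'.
  set (d := (N - S j)%nat). set (M := (k / 2^d)%nat).
  assert (hNd : N = (S j + d)%nat) by (unfold d; lia).
  assert (hM1 : (M * 2^d <= k)%nat).
  { unfold M. rewrite Nat.mul_comm. apply Nat.mul_div_le. apply Nat.pow_nonzero; lia. }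
  assert (hM2 : (k + 1 <= (M+1) * 2^d)%nat).
  { unfold M. assert (h := Nat.div_mod k (2^d) ltac:(apply Nat.pow_nonzero; lia)).
    assert (h' := Nat.mod_upper_bound k (2^d) ltac:(apply Nat.pow_nonzero; lia)). nia. }
  apply le_INR in hM1, hM2. rewrite !mult_INR, !pow_INR in hM1, hM2. rewrite !plus_INR in hM2.
  simpl INR in hM1, hM2. replace (1+1) with 2 in hM1, hM2 by ring.
  assert (h2d : 0 < 2^d) by (apply pow_lt; lra).
  assert (h2j : 0 < 2^S j) by (apply pow_lt; lra).
  rewrite hNd, pow_add in ht, ht'.
  assert (key : forall u, INR k / (2^S j * 2^d) < u < (INR k + 1) / (2^S j * 2^d) ->
             INR M < 2^S j * u < INR M + 1).
  { intros u hu.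
    assert (e1 : 2^S j * (INR k / (2^S j * 2^d)) = INR k / 2^d) by (field; lra).
    assert (e2 : 2^S j * ((INR k + 1) / (2^S j * 2^d)) = (INR k + 1) / 2^d) by (field; lra).
    assert (INR k / 2^d < 2^S j * u) by (rewrite <- e1; apply Rmult_lt_compat_l; lra).
    assert (2^S j * u < (INR k + 1) / 2^d) by (rewrite <- e2; apply Rmult_lt_compat_l; lra).
    split.
    - apply Rle_lt_trans with (2 := H). apply (Rmult_le_reg_r (2^d)); auto.
      unfold Rdiv; rewrite Rmult_assoc, Rinv_l; lra.
    - apply Rlt_le_trans with (1 := H0). apply (Rmult_le_reg_r (2^d)); auto.
      unfold Rdiv; rewrite Rmult_assoc, Rinv_l; lra. }
  unfold rademacher. replace (2 ^ S j * PI * t) with (PI * (2^S j * t)) by ring.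
  replace (2 ^ S j * PI * t') with (PI * (2^S j * t')) by ring.
  rewrite (sign_sin M), (sign_sin M); auto.
Qed.

Definition kint (a : nat -> R) (n : nat) (r : R) : R -> R :=
  fun t => rpow (Rabs (sum_f_R0 (fun j => a j * rademacher (S j) t) n)) r.

Lemma kint_ex a n r : ex_RInt (kint a n r) 0 1.
Proof.
  apply (pc_int _ (S n)). intros k t t' ht ht'. unfold kint. f_equal. f_equal.
  apply sum_eq. intros j hj. f_equal. apply (rad_const j (S n) k); auto; lia.
Qed.

Lemma conj_ge1 p : valid_exp p -> 1 <= conj_exp p.
Proof. destruct p as [q|]; simpl; intros h; [|lra]. destruct (conj_facts q h); lra. Qed.

Lemma RInt_sum (F : nat -> R -> R) a b n : (forall i, ex_RInt (F i) a b) ->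
  ex_RInt (fun t => sum_f_R0 (fun i => F i t) n) a b /\
  RInt (fun t => sum_f_R0 (fun i => F i t) n) a b = sum_f_R0 (fun i => RInt (F i) a b) n.
Proof.
  intros H. induction n; simpl.
  - split; auto.
  - destruct IHn as [h1 h2]. split.
    + apply (ex_RInt_plus (fun t => sum_f_R0 (fun i => F i t) n) (F (S n))); auto.
    + rewrite <- h2. apply (RInt_plus (fun t => sum_f_R0 (fun i => F i t) n) (F (S n))); auto.
Qed.

Lemma kvalid_use r C a n : khintchine_valid r C ->
  sqrt (sum_f_R0 (fun j => Rabs (a j) ^ 2) n) <= C * rpow (RInt (kint a n r) 0 1) (1 / r).
Proof.
  intros H. apply H. exists (ex_RInt_Reals_0 _ _ _ (kint_ex a n r)).
  rewrite <- RInt_Reals. reflexivity.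
Qed.

Lemma kint_ge0 a n r : 0 <= RInt (kint a n r) 0 1.
Proof. apply RInt_ge_0. lra. apply kint_ex. intros; unfold kint; apply rpow_ge0. Qed.

Lemma opnorm_ge0 p T normT : valid_exp p -> is_opnorm p None T normT -> 0 <= normT.
Proof.
  intros hv hn. apply Rle_trans with (2 := opnorm_ub p T normT _ _ hn (zero_ball p hv) (zero_ball None I)).
  apply Rabs_pos.
Qed.

Lemma main_C p T normT C n m : valid_exp p -> bilinear_on p None T -> is_opnorm p None T normT ->
  khintchine_valid (conj_exp p) C ->
  rpow (sum_f_R0 (fun i =>
            rpow (sum_f_R0 (fun j => Rabs (T (e i) (e j)) ^ 2) m)
                 (/ 2 * conj_exp p)) n)
         (/ conj_exp p) <= C * normT.
Proof.
  intros hv hbil hnorm hC.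
  assert (hr := conj_ge1 p hv). set (r := conj_exp p) in *.
  assert (hN := opnorm_ge0 p T normT hv hnorm).
  assert (hCpos : 0 < C).
  { assert (h := kvalid_use r C (fun _ => 1) 0 hC).
    assert (e1 : sum_f_R0 (fun j : nat => Rabs ((fun _ : nat => 1) j) ^ 2) 0 = 1) by (simpl; rewrite Rabs_R1; ring).
    cbv beta in h. rewrite e1 in h.
    rewrite sqrt_1 in h.
    assert (0 <= rpow (RInt (kint (fun _ => 1) 0 r) 0 1) (1/r)) by apply rpow_ge0.
    destruct (Rle_lt_dec C 0); auto. nra. }
  set (f := fun i => kint (fun j => T (e i) (e j)) m r).
  apply Rle_trans with (rpow (rpow C r * rpow normT r) (/r)).
  - apply rpow_le; [|apply Rinv_0_lt_compat; lra]. split.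
    { apply cond_pos_sum; intros; apply rpow_ge0. }
    apply Rle_trans with (sum_f_R0 (fun i => rpow C r * RInt (f i) 0 1) n).
    + apply sum_Rle. intros i hi.
      assert (h := kvalid_use r C (fun j => T (e i) (e j)) m hC).
      rewrite <- rpow_rpow by (apply cond_pos_sum; intros; apply pow2_ge_0).
      rewrite rpow_sqrt by (apply cond_pos_sum; intros; apply pow2_ge_0).
      apply Rle_trans with (rpow (C * rpow (RInt (f i) 0 1) (1 / r)) r).
      * apply rpow_le; [|lra]. split; auto. apply sqrt_pos.
      * rewrite rpow_mul by (lra || apply rpow_ge0). replace (1 / r) with (/ r) by (unfold Rdiv; ring).
        rewrite rpow_inv_r by (lra || apply kint_ge0). lra.
    + rewrite (sum_eq _ (fun i => RInt (f i) 0 1 * rpow C r)) by (intros; ring).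
      rewrite <- scal_sum.
      assert (hs := RInt_sum f 0 1 n (fun i => kint_ex _ _ _)).
      destruct hs as [hs1 hs2]. rewrite <- hs2.
      apply Rmult_le_compat_l; [apply rpow_ge0|].
      apply Rle_trans with (RInt (fun _ => rpow normT r) 0 1).
      * apply RInt_le; auto. lra. apply ex_RInt_const.
        intros t ht.
        set (y := vsum m (fun j => rademacher (S j) t)).
        assert (hy : in_ball None y) by (apply vsum_ball_inf; intros; apply Rsign_bound).
        apply Rle_trans with (2 := duality p T normT y n hv hbil hnorm hy).
        right. apply sum_eq. intros i hi. unfold f, kint, y.
        rewrite (lin2 p None T (e i) m _ hbil (e_in_X p i)). f_equal. f_equal.
        apply sum_eq; intros; ring.
      * rewrite RInt_const. simpl. unfold scal; simpl. unfold mult; simpl. lra.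
  - rewrite <- rpow_mul by lra. rewrite rpow_r_inv; nra.
Qed.

Theorem theorem2p1 (p : ext_exp) (Hp : valid_exp p)
  (T : (nat -> R) -> (nat -> R) -> R)
  (HT : continuous_bilinear p None T)
  (normT : R) (HnormT : is_opnorm p None T normT)
  (Ap : R) (HAp : is_khintchine_opt (conj_exp p) Ap) :
  forall n m : nat,
    rpow (sum_f_R0 (fun i =>
            rpow (sum_f_R0 (fun j => Rabs (T (e i) (e j)) ^ 2) m)
                 (/ 2 * conj_exp p)) n)
         (/ conj_exp p)
    <= Ap * normT.
Proof.
  intros n m. destruct HT as [hbil _]. destruct HAp as [_ HA].
  set (L := rpow _ _).
  assert (hL : forall C, khintchine_valid (conj_exp p) C -> L <= C * normT).
  { intros C hC. apply main_C; auto. }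
  assert (hN := opnorm_ge0 p T normT Hp HnormT).
  destruct hN as [hN|hN].
  - assert (L / normT <= Ap).
    { apply HA. intros C hC. specialize (hL C hC).
      apply (Rmult_le_reg_r normT); auto. unfold Rdiv; rewrite Rmult_assoc, Rinv_l; lra. }
    apply (Rmult_le_compat_r normT) in H; [|lra].
    unfold Rdiv in H; rewrite Rmult_assoc, Rinv_l in H; lra.
  - destruct (classic (exists C, khintchine_valid (conj_exp p) C)) as [[C hC]|hno].
    + specialize (hL C hC). rewrite <- hN in *. lra.
    + exfalso. assert (Ap + 1 <= Ap); [|lra]. apply HA. intros C hC. exfalso; apply hno; eauto.
Qed.
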